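(* Let $\mathcal{G}\subseteq C(\mathbb{R},\mathbb{R})$ be nonempty. The following conditions are equivalent: (1) $\{\mathrm{CL}(E):E\in\mathrm{CL}(\mathbb{R})\}\subseteq\mathcal{K}_\mathcal{G}$; (2) the least element of $(\mathcal{K}_\mathcal{G},\subseteq)$ is $\{\emptyset\}$; (3) for each $x\in\mathbb{R}$, $\mathcal{G}[x]\neq\mathbb{R}$.
   Context: For a closed set $E\subseteq\mathbb{R}$, $\mathrm{CL}(E)$ denotes the family of all closed subsets of $E$; $C(\mathbb{R},\mathbb{R})$ is the set of continuous functions $\mathbb{R}\to\mathbb{R}$. For $\mathcal{G}\subseteq C(\mathbb{R},\mathbb{R})$ and $x\in\mathbb{R}$, $\mathcal{G}[x]=\{g(x):g\in\mathcal{G}\}$. Let $R_\mathcal{G}=\{(f,E)\in C(\mathbb{R},\mathbb{R})\times\mathrm{CL}(\mathbb{R}):(\exists g\in\mathcal{G})\, f\restriction E=g\restriction E\}$; for $\mathcal{F}\subseteq C(\mathbb{R},\mathbb{R})$ put $E_\mathcal{G}(\mathcal{F})=\{E\in\mathrm{CL}(\mathbb{R}):(\forall f\in\mathcal{F})\,(f,E)\in R_\mathcal{G}\}$, and let $\mathcal{K}_\mathcal{G}=\{E_\mathcal{G}(\mathcal{F}):\mathcal{F}\subseteq C(\mathbb{R},\mathbb{R})\}$, ordered by inclusion (a complete lattice). *)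

(* Defs.v *)
From mathcomp Require Import all_boot all_order all_algebra.
From mathcomp Require Import all_classical all_reals all_analysis.
Set Implicit Arguments. Unset Strict Implicit. Unset Printing Implicit Defensive.
Import Order.TTheory GRing.Theory Num.Theory.
Local Open Scope classical_set_scope.
Local Open Scope ring_scope.
Import numFieldNormedType.Exports.

Definition Cont (R : realType) : set (R -> R) := [set f : R -> R | continuous (f : R -> R)].

Definition CL (R : realType) (E : set R) : set (set R) :=
  [set F | closed F /\ F `<=` E].

Definition RG (R : realType) (G : set (R -> R)) (f : R -> R) (E : set R) : Prop :=
  @Cont R f /\ @CL R setT E /\ exists2 g, G g & (forall x, E x -> f x = g x).

Definition EG (R : realType) (G : set (R -> R)) (F : set (R -> R)) : set (set R) :=
  [set E | @CL R setT E /\ forall f, F f -> RG G f E].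

Definition KG (R : realType) (G : set (R -> R)) : set (set (set R)) :=
  [set K | exists2 F, F `<=` @Cont R & K = EG G F].

Definition Gat (R : realType) (G : set (R -> R)) (x : R) : set R :=
  [set g x | g in G].

(* Main.v *)
Require Import Defs.
From mathcomp Require Import all_boot all_order all_algebra.
From mathcomp Require Import all_classical all_reals all_analysis.
Import Order.TTheory GRing.Theory Num.Theory.
Import numFieldNormedType.Exports.
Local Open Scope classical_set_scope.
Local Open Scope ring_scope.

Lemma bump (R : realType) (E : set R) (y : R) : closed E -> ~ E y ->
  exists b : R -> R, continuous b /\ (forall z, E z -> b z = 0) /\ b y = 1.
Proof.
move=> cE Ey.
have : nbhs y (~` E) by apply: (closed_openC cE).
case/nbhs_ballP => r /= r0 hr.
exists (fun z => Num.max 0 (1 - `|z - y| / r)); split; last split.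
- move=> x.
  have -> : (fun z : R => Num.max 0 (1 - `|z - y| / r)) =
     ((fun _ : R => 0 : R^o) \max (fun z : R => (1 - `|z - y| / r) : R^o)) by [].
  apply: continuous_max; first exact: cst_continuous.
  apply: continuousB; first exact: cst_continuous.
  apply: continuousM; last exact: cst_continuous.
  apply: (continuous_comp (f := fun z : R => z - y)); last exact: norm_continuous.
  apply: continuousB; [by move=> ?; exact: cvg_id | exact: cst_continuous].
- move=> z Ez; apply/max_idPl.
  have : ~ ball y r z by move=> /hr.
  rewrite -ball_normE /= => nb.
  rewrite subr_le0 ler_pdivlMr // mul1r distrC.
  by rewrite leNgt; apply/negP.
- by rewrite subrr normr0 mul0r subr0; apply/max_idPr.
Qed.

Lemma set1_closed (R : realType) (x : R) : closed [set x].
Proof. exact/accessible_closed_set1/hausdorff_accessible/Rhausdorff. Qed.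

Local Close Scope ring_scope.

Theorem theorem3p2 (R : realType) (G : set (R -> R)) :
  G `<=` @Cont R -> G !=set0 ->
  ( (forall E : set R, closed (E : set R) -> KG G (@CL R E)) <->
    (KG G [set set0] /\ (forall K, KG G K -> [set set0] `<=` K)) ) /\
  ( (KG G [set set0] /\ (forall K, KG G K -> [set set0] `<=` K)) <->
    (forall x : R, Gat G x <> setT) ).
Proof.
move=> GC [g0 Gg0].
have set0_in : forall F, F `<=` @Cont R -> EG G F set0.
  move=> F FC; split; first by split; [exact: closed0 | by []].
  move=> f Ff; split; first exact: FC.
  split; first by split; [exact: closed0 | by []].
  by exists g0.
have H23 : KG G [set set0] -> forall x : R, Gat G x <> setT.
  case=> F FC eqF x Gx.
  have : EG G F [set x].
    split; first by split; [exact: set1_closed | by []].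
    move=> f Ff; split; first exact: FC.
    split; first by split; [exact: set1_closed | by []].
    have : Gat G x (f x) by rewrite Gx.
    case=> g Gg gx; exists g => // z ->; by rewrite gx.
  by rewrite -eqF => /= hx; have : [set x] x by []; rewrite hx.
have H31 : (forall x : R, Gat G x <> setT) ->
    forall E : set R, closed E -> KG G (@CL R E).
  move=> H3 E cE.
  exists [set f | @Cont R f /\ (forall y, E y -> f y = g0 y) /\
                  exists x, ~ E x /\ ~ Gat G x (f x)].
    by move=> f [].
  apply/seteqP; split.
  - move=> D [cD DE]; split; first by split.
    move=> f [cf [fE _]]; split => //; split; first by split.
    by exists g0 => // z Dz; apply: fE; apply: DE.
  - move=> D [[cD _] HD]; split => // y Dy; apply: contrapT => Ey.
    have [c nc] : exists c, ~ Gat G y c.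
      apply: contrapT => hc; apply: (H3 y); apply/seteqP; split => // c _.
      by apply: contrapT => nc; apply: hc; exists c.
    have [b [cb [bE by1]]] := @bump _ _ _ cE Ey.
    pose f := fun z => (g0 z + (c - g0 y) * b z)%R.
    have Ff : @Cont R f /\ (forall y, E y -> f y = g0 y) /\
                  exists x, ~ E x /\ ~ Gat G x (f x).
      split; last split.
      + move=> z; rewrite /f; apply: (@continuousD R R^o _ g0 (fun z => (c - g0 y) * b z)%R z); first exact: GC.
        apply: (continuousM (s:=fun _ : R => (c - g0 y)%R) (t:=b) (x:=z)); [exact: cst_continuous | exact: cb].
      + by move=> z Ez; rewrite /f bE // GRing.mulr0 GRing.addr0.
      + exists y; split => //.
        by rewrite /f by1 GRing.mulr1 GRing.addrC GRing.subrK.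
    have [_ [_ [g Gg fg]]] := HD f Ff.
    have fy : f y = c by rewrite /f by1 GRing.mulr1 GRing.addrC GRing.subrK.
    by apply: nc; exists g => //; rewrite -fy fg.
have H12 : (forall E : set R, closed E -> KG G (@CL R E)) -> KG G [set set0].
  move=> H1; have := H1 set0 closed0.
  have -> : @CL R set0 = [set set0] by apply/seteqP; split;
    [move=> D [_ D0] /=; apply/seteqP; split | move=> D /= ->; split; [exact: closed0|]].
  by [].
have Hall : forall K, KG G K -> [set set0] `<=` K.
  by move=> K [F FC ->] D /= ->; exact: set0_in.
split; split.
- by move=> H1; split => //; exact: H12.
- by move=> [H2 _]; apply: H31; apply: H23.
- by move=> [H2 _]; apply: H23.
- by move=> H3; split => //; apply: H12; apply: H31.
Qed.
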